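(* Let $u\in\{A,B,C\}^{\mathbb N}$ be a 3iet word with parameters $\varepsilon,\ell$, and let $\varepsilon=[0,a_1,a_2,\dots]$ be the continued fraction expansion of $\varepsilon$. Then $$ {\rm ind}(u)<+\infty \qquad\iff\qquad \sup_{n\in\mathbb N} a_n < +\infty\,. $$
   Context: Parameters $\varepsilon,\ell$ satisfy $\varepsilon\in(0,1)\setminus\mathbb Q$ and $\max\{\varepsilon,1-\varepsilon\}<\ell<1$. The three interval exchange $T_{\varepsilon,\ell}:[0,\ell)\to[0,\ell)$ is defined by $T_{\varepsilon,\ell}(x)=x+1-\varepsilon$ for $x\in I_A:=[0,\ell-1+\varepsilon)$, $T_{\varepsilon,\ell}(x)=x+1-2\varepsilon$ for $x\in I_B:=[\ell-1+\varepsilon,\varepsilon)$, and $T_{\varepsilon,\ell}(x)=x-\varepsilon$ for $x\in I_C:=[\varepsilon,\ell)$. A 3iet word with parameters $\varepsilon,\ell$ is the word $u=(u_n)_{n\in\mathbb N}$ over $\{A,B,C\}$ with $u_n=X$ iff $T_{\varepsilon,\ell}^n(x_0)\in I_X$, for some $x_0\in[0,\ell)$; its language and index do not depend on $x_0$. A word $v$ is a power $w^r$ ($r=|v|/|w|$) if $|v|\ge|w|$ and $v$ is a prefix of $www\cdots$; ${\rm ind}(w)=\sup\{r\in\mathbb Q: w^r \text{ is a factor of } u\}$ and ${\rm ind}(u)=\sup\{{\rm ind}(w): w \text{ a factor of } u\}$. *)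

(* Defs.v *)
From Stdlib Require Import Reals Lra Lia List QArith.
From Coquelicot Require Import Coquelicot.
Open Scope R_scope.

Inductive letter := LA | LB | LC.

Definition T3 (eps l x : R) : R :=
  if Rlt_dec x (l - 1 + eps) then x + 1 - eps
  else if Rlt_dec x eps then x + 1 - 2 * eps
  else x - eps.

Definition code (eps l x : R) : letter :=
  if Rlt_dec x (l - 1 + eps) then LA
  else if Rlt_dec x eps then LB
  else LC.

Definition iet3_word (eps l x0 : R) (n : nat) : letter :=
  code eps l (Nat.iter n (T3 eps l) x0).

Definition factor (u : nat -> letter) (v : list letter) : Prop :=
  exists i : nat, forall k : nat, (k < length v)%nat -> nth k v LA = u (i + k)%nat.

(* v is a power w^r of the (nonempty) word w: |v| >= |w| and v is a prefix of www... *)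
Definition is_power (v w : list letter) : Prop :=
  w <> nil /\ (length w <= length v)%nat /\
  forall k : nat, (k < length v)%nat -> nth k v LA = nth (k mod length w) w LA.

(* ind(w) = sup { r in Q : w^r is a factor of u }  (r = |v|/|w|). *)
Definition ind_factor (u : nat -> letter) (w : list letter) : Rbar :=
  Lub_Rbar (fun r => exists v, factor u v /\ is_power v w /\
                     r = INR (length v) / INR (length w)).

(* ind(u) = sup { ind(w) : w a (nonempty) factor of u }, written as the
   supremum of the union of the sets defining each ind(w). *)
Definition ind_word (u : nat -> letter) : Rbar :=
  Lub_Rbar (fun r => exists w v, w <> nil /\ factor u w /\ factor u v /\
                     is_power v w /\ r = INR (length v) / INR (length w)).

(* Gauss map and continued fraction partial quotients:
   eps = [0; a_1, a_2, ...], a_{n+1} = floor (1 / G^n eps). *)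
Definition gauss (x : R) : R := / x - IZR (Int_part (/ x)).

Definition cf_digit (eps : R) (n : nat) : Z :=
  match n with
  | O => 0%Z
  | S m => Int_part (/ Nat.iter m gauss eps)
  end.

Definition irrational (x : R) : Prop := ~ exists q : Q, Q2R q = x.

(* Main.v *)
Require Import Defs.
From Stdlib Require Import Reals ZArith.
From Coquelicot Require Import Coquelicot.
From Stdlib Require Import Lra Lia List Classical.
From Stdlib Require QArith Qreals.
Open Scope R_scope.

Lemma Int_part_unique (t : R) (m : Z) : IZR m <= t < IZR m + 1 -> Int_part t = m.
Proof.
  intros [H1 H2]. unfold Int_part.
  assert (Hu : (m + 1)%Z = up t).
  { apply tech_up; rewrite plus_IZR; simpl; lra. }
  lia.
Qed.

Lemma frac_unique (t s : R) (m : Z) : t = s + IZR m -> 0 <= s < 1 -> frac_part t = s.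
Proof.
  intros Ht Hs. unfold frac_part.
  rewrite (Int_part_unique t m) by lra. lra.
Qed.

Lemma frac_range (t : R) : 0 <= frac_part t < 1.
Proof. destruct (base_fp t); lra. Qed.

Lemma frac_decomp (t : R) : t = frac_part t + IZR (Int_part t).
Proof. unfold frac_part; ring. Qed.

Lemma frac_shift (t : R) (m : Z) : frac_part (t + IZR m) = frac_part t.
Proof.
  apply frac_unique with (m := (Int_part t + m)%Z).
  - rewrite plus_IZR, (frac_decomp t) at 1. ring.
  - apply frac_range.
Qed.

Lemma frac_id (t : R) : 0 <= t < 1 -> frac_part t = t.
Proof. intros H; apply frac_unique with (m := 0%Z); simpl; lra. Qed.

Definition tt (eps : R) (n : nat) : R := Nat.iter n gauss eps.
Definition ad (eps : R) (n : nat) : Z := Int_part (/ tt eps n).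

Fixpoint QQ (eps : R) (n : nat) : Z :=
  match n with
  | O => 0%Z
  | S m => match m with O => 1%Z | S k => (ad eps k * QQ eps m + QQ eps k)%Z end
  end.
Fixpoint PP (eps : R) (n : nat) : Z :=
  match n with
  | O => 1%Z
  | S m => match m with O => 0%Z | S k => (ad eps k * PP eps m + PP eps k)%Z end
  end.

Lemma QQ_SS eps k : QQ eps (S (S k)) = (ad eps k * QQ eps (S k) + QQ eps k)%Z.
Proof. reflexivity. Qed.
Lemma PP_SS eps k : PP eps (S (S k)) = (ad eps k * PP eps (S k) + PP eps k)%Z.
Proof. reflexivity. Qed.

Definition DD eps n : Z := (PP eps n * QQ eps (S n) - PP eps (S n) * QQ eps n)%Z.

Lemma DD_pm eps n : DD eps n = 1%Z \/ DD eps n = (-1)%Z.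
Proof.
  induction n as [|n IH].
  - left; reflexivity.
  - unfold DD in *. rewrite QQ_SS, PP_SS.
    destruct IH as [H|H]; [right|left]; nia.
Qed.

Lemma tt_S eps n : tt eps (S n) = frac_part (/ tt eps n).
Proof. reflexivity. Qed.

Lemma tt_S_eq eps n : / tt eps n = IZR (ad eps n) + tt eps (S n).
Proof. rewrite tt_S; unfold ad, frac_part; ring. Qed.

Lemma ident eps n : (forall k, (k < n)%nat -> 0 < tt eps k) ->
  eps * (IZR (QQ eps (S n)) + IZR (QQ eps n) * tt eps n)
  = IZR (PP eps (S n)) + IZR (PP eps n) * tt eps n.
Proof.
  induction n as [|n IH]; intros Hp.
  - simpl. unfold tt; simpl. ring.
  - rewrite QQ_SS, PP_SS, !plus_IZR, !mult_IZR.
    assert (Ht : 0 < tt eps n) by (apply Hp; lia).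
    assert (Hinv := tt_S_eq eps n).
    assert (H1 : tt eps n * (IZR (ad eps n) + tt eps (S n)) = 1).
    { rewrite <- Hinv. field. lra. }
    assert (E := IH (fun k Hk => Hp k ltac:(lia))).
    set (a := IZR (ad eps n)) in *. set (t := tt eps n) in *. set (t' := tt eps (S n)) in *.
    set (Q1 := IZR (QQ eps (S n))) in *. set (Q0 := IZR (QQ eps n)) in *.
    set (P1 := IZR (PP eps (S n))) in *. set (P0 := IZR (PP eps n)) in *.
    apply Rminus_diag_uniq.
    replace (eps * (a * Q1 + Q0 + Q1 * t') - (a * P1 + P0 + P1 * t')) with
      ((eps*(Q1+Q0*t) - (P1+P0*t))*(a+t') + (eps*Q0 - P0)*(1 - t*(a+t'))) by ring.
    rewrite E, H1. ring.
Qed.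

Lemma QQ_grow eps n : (forall k, (k < n)%nat -> (1 <= ad eps k)%Z) ->
  (0 <= QQ eps n <= QQ eps (S n))%Z /\ (1 <= QQ eps (S n))%Z /\
  (Z.of_nat n <= QQ eps (S n))%Z /\ ((1 <= n)%nat -> (1 <= QQ eps n)%Z).
Proof.
  induction n as [|n IH]; intros Ha.
  - simpl. lia.
  - destruct (IH (fun k Hk => Ha k ltac:(lia))) as (H1 & H2 & H3 & H4).
    assert (Han := Ha n ltac:(lia)).
    rewrite QQ_SS.
    destruct n as [|m].
    + simpl in *. nia.
    + assert (1 <= QQ eps (S m))%Z by (apply H4; lia). nia.
Qed.

Lemma not_rat eps (q p : Z) : irrational eps -> (1 <= q)%Z -> eps * IZR q <> IZR p.
Proof.
  intros Hirr Hq E. apply Hirr.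
  exists (QArith_base.Qmake p (Z.to_pos q)). unfold Rdefinitions.Q2R; simpl.
  rewrite Z2Pos.id by lia.
  assert (IZR q <> 0) by (apply not_0_IZR; lia).
  rewrite <- E. field. auto.
Qed.

Lemma tt_pos_all eps : 0 < eps < 1 -> irrational eps -> forall n k, (k <= n)%nat -> 0 < tt eps k < 1.
Proof.
  intros He Hirr n. induction n as [|n IH]; intros k Hk.
  - assert (k = 0%nat) by lia. subst. unfold tt; simpl. lra.
  - destruct (Nat.eq_dec k (S n)) as [->|Hne]; [|apply IH; lia].
    assert (Hr := frac_range (/ tt eps n)). rewrite <- tt_S in Hr.
    split; [|lra].
    destruct (Rle_lt_dec (tt eps (S n)) 0) as [Hle|]; [|lra].
    assert (H0 : tt eps (S n) = 0) by lra.
    assert (Had : forall j, (j < S n)%nat -> (1 <= ad eps j)%Z).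
    { intros j Hj. destruct (IH j ltac:(lia)) as [Hj1 Hj2].
      unfold ad. destruct (base_Int_part (/ tt eps j)) as [B1 B2].
      assert (1 < / tt eps j).
      { rewrite <- Rinv_1. apply Rinv_lt_contravar; lra. }
      assert (Hz : 0 < IZR (Int_part (/ tt eps j))) by lra.
      apply lt_IZR in Hz. lia. }
    destruct (QQ_grow eps (S n) Had) as (_ & Hq & _).
    assert (Hid := ident eps (S n) (fun j Hj => proj1 (IH j ltac:(lia)))).
    rewrite H0 in Hid.
    exfalso; apply (not_rat eps _ (PP eps (S (S n))) Hirr Hq). lra.
Qed.

Lemma tt_pos eps : 0 < eps < 1 -> irrational eps -> forall n, 0 < tt eps n < 1.
Proof. intros He Hi n. apply (tt_pos_all eps He Hi n n). lia. Qed.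

Lemma ad_ge1 eps : 0 < eps < 1 -> irrational eps -> forall n, (1 <= ad eps n)%Z.
Proof.
  intros He Hi j. destruct (tt_pos eps He Hi j) as [Hj1 Hj2].
  unfold ad. destruct (base_Int_part (/ tt eps j)) as [B1 B2].
  assert (1 < / tt eps j) by (rewrite <- Rinv_1; apply Rinv_lt_contravar; lra).
  assert (Hz : 0 < IZR (Int_part (/ tt eps j))) by lra.
  apply lt_IZR in Hz. lia.
Qed.

Lemma QQ_facts eps : 0 < eps < 1 -> irrational eps -> forall n,
  (0 <= QQ eps n <= QQ eps (S n))%Z /\ (1 <= QQ eps (S n))%Z /\
  (Z.of_nat n <= QQ eps (S n))%Z /\ ((1 <= n)%nat -> (1 <= QQ eps n)%Z).
Proof. intros He Hi n. apply QQ_grow. intros; apply ad_ge1; auto. Qed.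

Definition ee eps n : R := IZR (QQ eps (S n)) * eps - IZR (PP eps (S n)).

Lemma ee_eq eps : 0 < eps < 1 -> irrational eps -> forall n,
  ee eps n * (IZR (QQ eps (S (S n))) + IZR (QQ eps (S n)) * tt eps (S n)) = IZR (DD eps n).
Proof.
  intros He Hi n.
  assert (Hid := ident eps n (fun k _ => proj1 (tt_pos eps He Hi k))).
  assert (Ht := tt_pos eps He Hi n).
  assert (Hinv := tt_S_eq eps n).
  assert (H1 : tt eps n * (IZR (ad eps n) + tt eps (S n)) = 1).
  { rewrite <- Hinv. field. lra. }
  unfold ee, DD. rewrite QQ_SS, !minus_IZR, !plus_IZR, !mult_IZR.
  set (a := IZR (ad eps n)) in *. set (t := tt eps n) in *. set (t' := tt eps (S n)) in *.
  set (Q1 := IZR (QQ eps (S n))) in *. set (Q0 := IZR (QQ eps n)) in *.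
  set (P1 := IZR (PP eps (S n))) in *. set (P0 := IZR (PP eps n)) in *.
  apply Rminus_diag_uniq.
  replace ((Q1 * eps - P1) * (a * Q1 + Q0 + Q1 * t') - (P0 * Q1 - P1 * Q0)) with
    ((Q1 * (eps * (Q1 + Q0 * t) - (P1 + P0 * t))) * (a + t')
     + (P1*Q0 - Q1*P0 - eps*Q1*Q0 + P1 * Q0) * 0 + (P0 * Q1 - P1*Q0 - Q1 * eps * Q0 + P1 * Q0) * (t * (a+t') - 1)) by ring.
  rewrite Hid, H1. ring.
Qed.

Lemma ee_bounds eps : 0 < eps < 1 -> irrational eps -> forall n,
  0 < Rabs (ee eps n) /\ Rabs (ee eps n) * IZR (QQ eps (S (S n))) < 1 /\
  1 < Rabs (ee eps n) * (IZR (QQ eps (S (S n))) + IZR (QQ eps (S n))).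
Proof.
  intros He Hi n.
  assert (E := ee_eq eps He Hi n).
  assert (Hd : Rabs (IZR (DD eps n)) = 1).
  { destruct (DD_pm eps n) as [-> | ->]; unfold Rabs; destruct Rcase_abs; lra. }
  assert (Ht := tt_pos eps He Hi (S n)).
  destruct (QQ_facts eps He Hi (S n)) as (Hq0 & Hq1 & _).
  apply IZR_le in Hq1. destruct Hq0 as [Hq0 Hq0']. apply IZR_le in Hq0. apply IZR_le in Hq0'.
  assert (Hp2 : IZR (QQ eps (S n)) * tt eps (S n) < IZR (QQ eps (S n))).
  { assert (1 <= QQ eps (S n))%Z by (apply (QQ_facts eps He Hi n)). apply IZR_le in H. nra. }
  assert (Hp1 : 0 < IZR (QQ eps (S n)) * tt eps (S n)).
  { assert (1 <= QQ eps (S n))%Z by (apply (QQ_facts eps He Hi n)). apply IZR_le in H. nra. }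
  set (X := IZR (QQ eps (S (S n))) + IZR (QQ eps (S n)) * tt eps (S n)) in *.
  assert (HX : 0 < X) by (unfold X; lra).
  assert (E2 : Rabs (ee eps n) * X = 1).
  { rewrite <- Hd, <- E, Rabs_mult, (Rabs_right X) by lra. reflexivity. }
  assert (Hxl : IZR (QQ eps (S (S n))) < X) by (unfold X; lra).
  assert (Hxr : X < IZR (QQ eps (S (S n))) + IZR (QQ eps (S n))) by (unfold X; lra).
  assert (Ha := Rabs_pos (ee eps n)).
  split; [|split]; nra.
Qed.

Lemma grid eps : 0 < eps < 1 -> irrational eps -> forall n B,
  exists j : nat, (1 <= j)%nat /\ (Z.of_nat j <= QQ eps (S n))%Z /\
  exists m : Z, Rabs (INR j * eps - IZR m - B) * IZR (QQ eps (S n)) < 3/2.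
Proof.
  intros He Hi n B.
  set (q := QQ eps (S n)). set (p := PP eps (S n)).
  destruct (QQ_facts eps He Hi n) as ((Hq0 & Hqq) & Hq1 & _).
  destruct (ee_bounds eps He Hi n) as (Hb0 & Hb1 & _).
  set (r := Int_part (B * IZR q + /2)).
  destruct (base_Int_part (B * IZR q + /2)) as [Hr1 Hr2]. fold r in Hr1, Hr2.
  set (D := DD eps n).
  set (j0 := (- D * QQ eps n * r)%Z).
  set (s := ((j0 - 1) / q)%Z).
  set (jz := (j0 - q * s)%Z).
  set (k := (- s * p - D * r * PP eps n)%Z).
  assert (Hdm := Z.div_mod (j0 - 1) q ltac:(lia)).
  assert (Hmb := Z.mod_pos_bound (j0 - 1) q ltac:(lia)).
  assert (Hjz : (1 <= jz <= q)%Z) by (unfold jz, s; lia).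
  assert (Hkey : (jz * p = r + q * k)%Z).
  { unfold jz, k, j0. assert (HD : D = (PP eps n * q - p * QQ eps n)%Z) by reflexivity.
    assert (HD2 : (D * r * D = D * r * (PP eps n * q - p * QQ eps n))%Z) by (rewrite <- HD; reflexivity).
    assert (HDD : (D * D = 1)%Z) by (destruct (DD_pm eps n) as [H|H]; fold D in H; rewrite H; reflexivity).
    assert (Hr' : (D * r * D = r)%Z) by (rewrite <- Z.mul_assoc, (Z.mul_comm r D), Z.mul_assoc, HDD; ring).
    rewrite Hr' in HD2. lia. }
  exists (Z.to_nat jz). split; [lia|]. split; [lia|].
  exists k.
  rewrite INR_IZR_INZ, Z2Nat.id by lia.
  assert (Hkey' : IZR jz * IZR p = IZR r + IZR q * IZR k).
  { rewrite <- !mult_IZR, <- plus_IZR. f_equal. exact Hkey. }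
  assert (He' : ee eps n = IZR q * eps - IZR p) by reflexivity.
  assert (Hq : 1 <= IZR q) by (apply IZR_le; lia).
  assert (Hjq : 1 <= IZR jz <= IZR q) by (split; apply IZR_le; lia).
  assert (HQ2 : IZR q <= IZR (QQ eps (S (S n)))).
  { apply IZR_le. destruct (QQ_facts eps He Hi (S n)) as ((_ & Hq2) & _). exact Hq2. }
  assert (Hform : (IZR jz * eps - IZR k - B) * IZR q = (IZR r - B * IZR q) + IZR jz * ee eps n).
  { rewrite He'. lra. }
  rewrite <- (Rabs_right (IZR q)) by lra. rewrite <- Rabs_mult, Hform.
  apply Rle_lt_trans with (Rabs (IZR r - B * IZR q) + Rabs (IZR jz * ee eps n)).
  { apply Rabs_triang. }
  rewrite Rabs_mult, (Rabs_right (IZR jz)) by lra.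
  assert (Rabs (IZR r - B * IZR q) <= /2) by (apply Rabs_le; lra).
  assert (IZR jz * Rabs (ee eps n) <= IZR (QQ eps (S (S n))) * Rabs (ee eps n)) by nra.
  lra.
Qed.

Lemma exists_level eps : 0 < eps < 1 -> irrational eps -> forall K : Z, (1 <= K)%Z ->
  exists n, (QQ eps (S n) <= K < QQ eps (S (S n)))%Z.
Proof.
  intros He Hi K HK.
  destruct (Classical_Prop.classic (exists n, (QQ eps (S n) <= K < QQ eps (S (S n)))%Z)) as [H|H]; auto.
  exfalso.
  assert (Hall : forall n, (QQ eps (S n) <= K)%Z).
  { induction n as [|n IH]. { simpl. lia. }
    destruct (Z_lt_le_dec K (QQ eps (S (S n)))) as [Hlt|Hle]; auto.
    exfalso; apply H; exists n; lia. }
  destruct (QQ_facts eps He Hi (Z.to_nat K)) as (_ & _ & H3 & _).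
  specialize (Hall (S (Z.to_nat K))). 
  destruct (QQ_facts eps He Hi (S (Z.to_nat K))) as ((_ & H4) & _ & H5 & _). lia.
Qed.

Lemma QQ_le_M eps (M : Z) : 0 < eps < 1 -> irrational eps ->
  (forall n, (cf_digit eps n <= M)%Z) -> forall n,
  (QQ eps (S (S n)) <= (M + 1) * QQ eps (S n))%Z.
Proof.
  intros He Hi Hb n. rewrite QQ_SS.
  assert (Ha : (ad eps n <= M)%Z) by exact (Hb (S n)).
  destruct (QQ_facts eps He Hi n) as ((H0 & H1) & H2 & _).
  assert (Ha1 := ad_ge1 eps He Hi n). nia.
Qed.

Lemma zmult_small (m q X : Z) : (1 <= m < q)%Z -> (m = q * X \/ - m = q * X)%Z -> False.
Proof.
  intros Hm Hx. destruct (Z_lt_le_dec X 0) as [H|H]; [|destruct (Z.eq_dec X 0) as [->|H']]; nia.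
Qed.

Lemma lowb eps (M : Z) : 0 < eps < 1 -> irrational eps ->
  (forall n, (cf_digit eps n <= M)%Z) -> forall (m : nat) (k : Z), (1 <= m)%nat ->
  1 < Rabs (INR m * eps - IZR k) * ((IZR M + 1) * (IZR M + 2) * INR m).
Proof.
  intros He Hi Hb m k Hm.
  destruct (exists_level eps He Hi (Z.of_nat m) ltac:(lia)) as [n [Hn1 Hn2]].
  set (q' := QQ eps (S (S n))) in *. set (p' := PP eps (S (S n))).
  set (Q1 := QQ eps (S n)) in *.
  assert (HDD : DD eps (S n) = 1%Z \/ DD eps (S n) = (-1)%Z) by apply DD_pm.
  assert (HDdef : DD eps (S n) = (PP eps (S n) * q' - p' * Q1)%Z) by reflexivity.
  destruct (QQ_facts eps He Hi n) as (_ & HQ1 & _).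
  fold Q1 in HQ1.
  assert (HN0 : (Z.of_nat m * p' - k * q' <> 0)%Z).
  { intros H0.
    assert (Hx : (Z.of_nat m * DD eps (S n) = q' * (Z.of_nat m * PP eps (S n) - k * Q1))%Z).
    { rewrite HDdef. nia. }
    apply (zmult_small (Z.of_nat m) q' (Z.of_nat m * PP eps (S n) - k * Q1)); [lia|].
    destruct HDD as [H|H]; rewrite H in Hx; [left|right]; lia. }
  assert (HN1 : 1 <= Rabs (IZR (Z.of_nat m * p' - k * q'))).
  { destruct (Z_lt_le_dec (Z.of_nat m * p' - k * q') 0) as [Hl|Hl].
    - rewrite Rabs_left by (apply IZR_lt; lia). rewrite <- opp_IZR. apply IZR_le. lia.
    - rewrite Rabs_right by (apply Rle_ge, IZR_le; lia). apply IZR_le. lia. }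
  destruct (ee_bounds eps He Hi (S n)) as (HE0 & HE1 & _).
  set (E := Rabs (ee eps (S n))) in *.
  assert (HQ3 : (q' + Q1 <= QQ eps (S (S (S n))))%Z).
  { unfold q', Q1. rewrite (QQ_SS eps (S n)). assert (Ha1 := ad_ge1 eps He Hi (S n)).
    destruct (QQ_facts eps He Hi (S n)) as ((H0 & H1) & H2 & _). nia. }
  apply IZR_le in HQ3. rewrite plus_IZR in HQ3.
  assert (HB : E * (IZR q' + IZR Q1) < 1) by nra.
  assert (Hmz : INR m = IZR (Z.of_nat m)) by apply INR_IZR_INZ.
  assert (HC : INR m + 1 <= IZR q') by (rewrite Hmz; rewrite <- plus_IZR; apply IZR_le; lia).
  assert (HQ1m : IZR Q1 <= INR m) by (rewrite Hmz; apply IZR_le; lia).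
  assert (HQ1r : 1 <= IZR Q1) by (apply IZR_le; lia).
  assert (HqM : IZR q' <= (IZR M + 1) * IZR Q1).
  { rewrite <- plus_IZR, <- mult_IZR. apply IZR_le. apply (QQ_le_M eps M He Hi Hb n). }
  set (x := Rabs (INR m * eps - IZR k)).
  assert (HA : x * IZR q' >= 1 - INR m * E).
  { assert (Hf : (INR m * eps - IZR k) * IZR q' = IZR (Z.of_nat m * p' - k * q') + INR m * ee eps (S n)).
    { unfold ee. fold q' p'. rewrite minus_IZR, !mult_IZR, <- Hmz. ring. }
    unfold x. rewrite <- (Rabs_right (IZR q')) by lra. rewrite <- Rabs_mult, Hf.
    assert (Ht := Rabs_triang_inv (IZR (Z.of_nat m * p' - k * q')) (- (INR m * ee eps (S n)))).
    replace (IZR (Z.of_nat m * p' - k * q') - - (INR m * ee eps (S n))) with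
      (IZR (Z.of_nat m * p' - k * q') + INR m * ee eps (S n)) in Ht by ring.
    rewrite Rabs_Ropp, Rabs_mult, (Rabs_right (INR m)) in Ht by (apply Rle_ge, pos_INR).
    fold E in Ht. lra. }
  assert (Hm0 : 0 <= INR m) by apply pos_INR.
  assert (HX : x * IZR q' * (IZR q' + IZR Q1) > IZR Q1).
  { assert (H1 : (1 - INR m * E) * (IZR q' + IZR Q1) > IZR Q1) by nra.
    assert (0 < IZR q' + IZR Q1) by lra.
    assert (H2 : x * IZR q' * (IZR q' + IZR Q1) >= (1 - INR m * E) * (IZR q' + IZR Q1)) by nra.
    lra. }
  assert (Hx0 : 0 <= x) by apply Rabs_pos.
  assert (HM1 : 0 <= IZR M).
  { assert (Hd := Hb 1%nat). assert (Ha := ad_ge1 eps He Hi 0). apply IZR_le. simpl in Hd.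
    unfold ad in Ha. unfold tt in Ha. simpl in Ha. lia. }
  assert (HY : x * ((IZR M + 1) * IZR Q1) * ((IZR M + 2) * IZR Q1) > IZR Q1).
  { assert (x * IZR q' <= x * ((IZR M + 1) * IZR Q1)) by nra.
    assert (IZR q' + IZR Q1 <= (IZR M + 2) * IZR Q1) by lra.
    assert (0 <= x * IZR q') by nra.
    nra. }
  assert (HZ : x * ((IZR M + 1) * (IZR M + 2) * IZR Q1) > 1).
  { apply (Rmult_lt_reg_r (IZR Q1)). lra. nra. }
  assert (x * ((IZR M + 1) * (IZR M + 2) * IZR Q1) <= x * ((IZR M + 1) * (IZR M + 2) * INR m)).
  { apply Rmult_le_compat_l; auto. apply Rmult_le_compat_l; nra. }
  lra.
Qed.

Lemma gapb eps (M : Z) : 0 < eps < 1 -> irrational eps ->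
  (forall n, (cf_digit eps n <= M)%Z) -> forall (K : nat) (y y' : R), (1 <= K)%nat -> y < y' ->
  (forall (j : nat) (m : Z), (1 <= j <= K)%nat -> ~ (y < INR j * eps - IZR m < y')) ->
  (y' - y) * INR K < 3 * (IZR M + 1).
Proof.
  intros He Hi Hb K y y' HK Hy Hno.
  destruct (exists_level eps He Hi (Z.of_nat K) ltac:(lia)) as [n [Hn1 Hn2]].
  destruct (grid eps He Hi n ((y + y') / 2)) as (j & Hj1 & Hj2 & m & Hjm).
  destruct (QQ_facts eps He Hi n) as (_ & HQ1 & _).
  assert (HQ1r : 1 <= IZR (QQ eps (S n))) by (apply IZR_le; lia).
  assert (Hsm : (y' - y) * IZR (QQ eps (S n)) < 3).
  { destruct (Rlt_le_dec ((y' - y) * IZR (QQ eps (S n))) 3) as [H|H]; auto.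
    exfalso. apply (Hno j m). { split; auto. lia. }
    assert (Hr : Rabs (INR j * eps - IZR m - (y + y') / 2) < (y' - y) / 2).
    { apply (Rmult_lt_reg_r (IZR (QQ eps (S n)))); lra. }
    apply Rabs_def2 in Hr. lra. }
  assert (HqM := QQ_le_M eps M He Hi Hb n).
  assert (HK' : INR K < (IZR M + 1) * IZR (QQ eps (S n))).
  { rewrite INR_IZR_INZ, <- plus_IZR, <- mult_IZR. apply IZR_lt. lia. }
  assert (HM1 : 0 <= IZR M + 1).
  { assert (Hd := Hb 1%nat). assert (Ha := ad_ge1 eps He Hi 0).
    unfold ad, tt in Ha; simpl in Ha, Hd. rewrite <- plus_IZR. apply IZR_le. lia. }
  nra.
Qed.

Definition Rk (eps : R) (k : nat) (x : R) : R := frac_part (x - INR k * eps).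
Definition code4 (eps l x : R) : nat :=
  if Rlt_dec x (l - 1 + eps) then 0%nat
  else if Rlt_dec x eps then 1%nat
  else if Rlt_dec x l then 2%nat else 3%nat.
Definition letter_of (c : nat) : letter :=
  match c with O => LA | 1 => LB | _ => LC end.
Definition stp (c : nat) : nat := match c with 1 => 2 | _ => 1 end%nat.
Fixpoint kap (eps l x : R) (j : nat) : nat :=
  match j with
  | O => O
  | S j' => (kap eps l x j' + stp (code4 eps l (Rk eps (kap eps l x j') x)))%nat
  end.

Lemma Rk_comp eps a b x : Rk eps a (Rk eps b x) = Rk eps (a + b) x.
Proof.
  unfold Rk. rewrite plus_INR.
  replace (x - (INR a + INR b) * eps) with
     (frac_part (x - INR b * eps) - INR a * eps + IZR (Int_part (x - INR b * eps))) by
     (unfold frac_part; ring).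
  rewrite frac_shift. reflexivity.
Qed.

Lemma Rk_0 eps x : 0 <= x < 1 -> Rk eps 0 x = x.
Proof. intros H. unfold Rk. simpl. rewrite Rmult_0_l, Rminus_0_r. apply frac_id; auto. Qed.

Lemma Rk_range eps k x : 0 <= Rk eps k x < 1.
Proof. apply frac_range. Qed.

Lemma code_letter eps l w : code eps l w = letter_of (code4 eps l w).
Proof.
  unfold code, code4. destruct (Rlt_dec w (l - 1 + eps)); auto.
  destruct (Rlt_dec w eps); auto. destruct (Rlt_dec w l); auto.
Qed.

Lemma code4_le2 eps l w : w < l -> (code4 eps l w <= 2)%nat.
Proof.
  intros H. unfold code4. destruct (Rlt_dec w (l - 1 + eps)); [lia|].
  destruct (Rlt_dec w eps); [lia|]. destruct (Rlt_dec w l); [lia|lra].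
Qed.

Lemma letter_of_inj c c' : (c <= 2)%nat -> (c' <= 2)%nat -> letter_of c = letter_of c' -> c = c'.
Proof.
  intros H1 H2 H. destruct c as [|[|[|c]]]; destruct c' as [|[|[|c']]]; simpl in H;
  try discriminate; try reflexivity; lia.
Qed.

Lemma T3_Rk eps l w : 0 < eps < 1 -> eps < l -> 1 - eps < l -> l < 1 -> 0 <= w < l ->
  T3 eps l w = Rk eps (stp (code4 eps l w)) w.
Proof.
  intros He H1 H2 H3 Hw. unfold T3, code4, Rk.
  destruct (Rlt_dec w (l - 1 + eps)).
  - simpl. symmetry. apply frac_unique with (m := (-1)%Z). simpl; ring. lra.
  - destruct (Rlt_dec w eps).
    + simpl. symmetry. apply frac_unique with (m := (-1)%Z). simpl; ring. lra.
    + destruct (Rlt_dec w l); [|lra]. simpl. rewrite Rmult_1_l. symmetry. apply frac_id. lra.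
Qed.

Lemma T3_range eps l w : 0 < eps < 1 -> eps < l -> 1 - eps < l -> l < 1 -> 0 <= w < l ->
  0 <= T3 eps l w < l.
Proof.
  intros He H1 H2 H3 Hw. unfold T3.
  destruct (Rlt_dec w (l - 1 + eps)); [lra|]. destruct (Rlt_dec w eps); lra.
Qed.

Lemma iter_range eps l x j : 0 < eps < 1 -> eps < l -> 1 - eps < l -> l < 1 -> 0 <= x < l ->
  0 <= Nat.iter j (T3 eps l) x < l.
Proof.
  intros He H1 H2 H3 Hx. induction j as [|j IH]; simpl; auto. apply T3_range; auto.
Qed.

Lemma iter_kap eps l x j : 0 < eps < 1 -> eps < l -> 1 - eps < l -> l < 1 -> 0 <= x < l ->
  Nat.iter j (T3 eps l) x = Rk eps (kap eps l x j) x.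
Proof.
  intros He H1 H2 H3 Hx. induction j as [|j IH].
  - simpl. rewrite Rk_0; auto. lra.
  - simpl (Nat.iter (S j) _ _). rewrite T3_Rk by (auto; apply iter_range; auto).
    rewrite IH. simpl kap. rewrite Rk_comp. f_equal. lia.
Qed.

Lemma stp_bounds c : (1 <= stp c <= 2)%nat.
Proof. destruct c as [|[|c]]; simpl; lia. Qed.

Lemma kap_bounds eps l x j : (j <= kap eps l x j <= 2 * j)%nat.
Proof.
  induction j as [|j IH]; simpl kap; [lia|].
  assert (H := stp_bounds (code4 eps l (Rk eps (kap eps l x j) x))). lia.
Qed.

Lemma kap_S eps l x j : (kap eps l x j < kap eps l x (S j))%nat.
Proof.
  simpl kap. assert (H := stp_bounds (code4 eps l (Rk eps (kap eps l x j) x))). lia.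
Qed.

Lemma kap_mono eps l x j j' : (j < j')%nat -> (kap eps l x j < kap eps l x j')%nat.
Proof.
  intros H. induction H.
  - apply kap_S.
  - assert (H1 := kap_S eps l x m). lia.
Qed.

Lemma code4_1_next eps l w : 0 < eps < 1 -> eps < l -> l < 1 -> 0 <= w < 1 ->
  code4 eps l w = 1%nat -> l <= Rk eps 1 w /\ code4 eps l (Rk eps 1 w) = 3%nat.
Proof.
  intros He H1 H3 Hw. unfold code4 at 1.
  destruct (Rlt_dec w (l - 1 + eps)); [discriminate|].
  destruct (Rlt_dec w eps); [|destruct (Rlt_dec w l); discriminate].
  intros _.
  assert (E : Rk eps 1 w = w - eps + 1).
  { unfold Rk. apply frac_unique with (m := (-1)%Z). simpl; ring. lra. }
  rewrite E. split; [lra|]. unfold code4.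
  destruct (Rlt_dec (w - eps + 1) (l - 1 + eps)); [lra|].
  destruct (Rlt_dec (w - eps + 1) eps); [lra|].
  destruct (Rlt_dec (w - eps + 1) l); [lra|]. reflexivity.
Qed.

Lemma hit eps l x : 0 < eps < 1 -> eps < l -> 1 - eps < l -> l < 1 -> 0 <= x < l ->
  forall k, Rk eps k x < l -> exists i, kap eps l x i = k.
Proof.
  intros He H1 H2 H3 Hx.
  assert (Hc : forall k, (exists i, kap eps l x i = k) \/
     (exists i, (kap eps l x i + 1 = k)%nat /\ code4 eps l (Rk eps (kap eps l x i) x) = 1%nat)).
  { induction k as [|k IH].
    - left. exists 0%nat. reflexivity.
    - destruct IH as [[i Hi]|[i [Hi Hc]]].
      + destruct (Nat.eq_dec (code4 eps l (Rk eps k x)) 1) as [Hc|Hc].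
        * right. exists i. rewrite Hi. split; [lia|auto].
        * left. exists (S i). simpl. rewrite Hi.
          destruct (code4 eps l (Rk eps k x)) as [|[|c]]; simpl; try lia. 
      + left. exists (S i). simpl. rewrite Hc. simpl. lia. }
  intros k Hk. destruct (Hc k) as [H|[i [Hi Hci]]]; auto.
  exfalso.
  destruct (code4_1_next eps l (Rk eps (kap eps l x i) x) He H1 H3 (Rk_range _ _ _) Hci) as [Hl _].
  rewrite Rk_comp in Hl. replace (1 + kap eps l x i)%nat with k in Hl by lia. lra.
Qed.

Lemma lock_i eps l y z K : (forall k, (k < K)%nat -> code4 eps l (Rk eps k y) = code4 eps l (Rk eps k z)) ->
  forall j, (kap eps l y j <= K)%nat -> kap eps l z j = kap eps l y j.
Proof.
  intros Hag j. induction j as [|j IH]; intros Hj; [reflexivity|].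
  assert (Hs := kap_S eps l y j).
  assert (IH' := IH ltac:(lia)).
  simpl kap in *. rewrite IH'. rewrite (Hag (kap eps l y j)) by lia. reflexivity.
Qed.

Lemma lock_ii eps l y z : 0 < eps < 1 -> eps < l -> l < 1 -> forall N,
  (forall j, (j < N)%nat -> code4 eps l (Rk eps (kap eps l y j) y) = code4 eps l (Rk eps (kap eps l z j) z)) ->
  kap eps l z N = kap eps l y N /\
  forall k, (k < kap eps l y N)%nat -> code4 eps l (Rk eps k y) = code4 eps l (Rk eps k z).
Proof.
  intros He H1 H3 N. induction N as [|N IH]; intros Hag.
  - split; [reflexivity|]. simpl; lia.
  - destruct (IH (fun j Hj => Hag j ltac:(lia))) as [Hk Hc].
    assert (HN := Hag N ltac:(lia)). rewrite Hk in HN.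
    simpl kap. rewrite Hk. rewrite <- HN. split; [reflexivity|].
    intros k Hlt.
    destruct (Nat.lt_ge_cases k (kap eps l y N)) as [Hl|Hg]; [apply Hc; auto|].
    destruct (Nat.eq_dec k (kap eps l y N)) as [->|Hne]; [exact HN|].
    remember (code4 eps l (Rk eps (kap eps l y N) y)) as c eqn:Ec.
    destruct c as [|[|c]]; simpl in Hlt; try lia.
    assert (k = S (kap eps l y N)) by lia. subst k.
    destruct (code4_1_next eps l _ He H1 H3 (Rk_range eps (kap eps l y N) y) (eq_sym Ec)) as [_ E1].
    destruct (code4_1_next eps l _ He H1 H3 (Rk_range eps (kap eps l y N) z) (eq_sym HN)) as [_ E2].
    rewrite Rk_comp in E1, E2. simpl in E1, E2. rewrite E1, E2. reflexivity.
Qed.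

Lemma code4_lt_eps eps l x : l < 1 -> ((code4 eps l x <= 1)%nat <-> x < eps).
Proof.
  intros Hl. unfold code4. destruct (Rlt_dec x (l - 1 + eps)); [split; intros; lia || lra|].
  destruct (Rlt_dec x eps); [split; intros; lia || lra|].
  destruct (Rlt_dec x l); split; intros; lia || lra.
Qed.

Lemma Rk1_formula eps X : 0 < eps < 1 -> 0 <= X < 1 ->
  Rk eps 1 X = if Rlt_dec X eps then X - eps + 1 else X - eps.
Proof.
  intros He HX. unfold Rk. rewrite Rmult_1_l. destruct (Rlt_dec X eps).
  - apply frac_unique with (m := (-1)%Z). simpl; ring. lra.
  - apply frac_id. lra.
Qed.

Lemma rigid eps l lo hi K : 0 < eps < 1 -> l < 1 -> lo <= hi -> 0 <= lo < 1 -> 0 <= hi < 1 ->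
  (forall k, (k < K)%nat -> code4 eps l (Rk eps k lo) = code4 eps l (Rk eps k hi)) ->
  forall k, (k <= K)%nat -> Rk eps k hi - Rk eps k lo = hi - lo.
Proof.
  intros He Hl Hlh Hlo Hhi Hag k. induction k as [|k IH]; intros Hk.
  - rewrite !Rk_0; auto.
  - assert (IH' := IH ltac:(lia)).
    replace (S k) with (1 + k)%nat by lia. rewrite <- !Rk_comp.
    assert (Hc := Hag k ltac:(lia)).
    assert (E1 := code4_lt_eps eps l (Rk eps k lo) Hl).
    assert (E2 := code4_lt_eps eps l (Rk eps k hi) Hl).
    rewrite Hc in E1.
    rewrite !Rk1_formula by (auto; apply Rk_range).
    destruct (Rlt_dec (Rk eps k hi) eps); destruct (Rlt_dec (Rk eps k lo) eps); try lra;
      exfalso; tauto.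
Qed.

Lemma no_point eps l lo hi K : 0 < eps < 1 -> l < 1 -> lo < hi -> 0 <= lo < 1 -> 0 <= hi < 1 ->
  (forall k, (k < K)%nat -> code4 eps l (Rk eps k lo) = code4 eps l (Rk eps k hi)) ->
  forall (j : nat) (m : Z), (1 <= j <= K)%nat -> ~ (lo < INR j * eps - IZR m < hi).
Proof.
  intros He Hl Hlh Hlo Hhi Hag j m Hj Hw.
  set (w := INR j * eps - IZR m) in *.
  set (k := (j - 1)%nat).
  assert (Hr := rigid eps l lo hi K He Hl ltac:(lra) Hlo Hhi Hag k ltac:(unfold k; lia)).
  assert (Hw1 : Rk eps k w = Rk eps k lo + (w - lo)).
  { unfold Rk at 1. apply frac_unique with (m := Int_part (lo - INR k * eps)).
    - unfold Rk. unfold frac_part. ring.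
    - assert (H := Rk_range eps k lo). assert (H' := Rk_range eps k hi). lra. }
  assert (Hw2 : Rk eps k w = eps).
  { unfold Rk, w. apply frac_unique with (m := (- m)%Z).
    - unfold k. rewrite opp_IZR. replace j with (S (j - 1)) at 1 by lia. rewrite S_INR. ring.
    - lra. }
  assert (Hc := Hag k ltac:(unfold k; lia)).
  assert (E1 := code4_lt_eps eps l (Rk eps k lo) Hl).
  assert (E2 := code4_lt_eps eps l (Rk eps k hi) Hl).
  rewrite Hc in E1.
  assert (Rk eps k lo < eps) by lra.
  assert (~ Rk eps k hi < eps) by lra.
  tauto.
Qed.

Lemma u_shift eps l x0 i k : 0 < eps < 1 -> eps < l -> 1 - eps < l -> l < 1 -> 0 <= x0 < l ->
  iet3_word eps l x0 (i + k) =
  letter_of (code4 eps l (Rk eps (kap eps l (Nat.iter i (T3 eps l) x0) k) (Nat.iter i (T3 eps l) x0))).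
Proof.
  intros He H1 H2 H3 Hx. unfold iet3_word.
  rewrite Nat.add_comm, Nat.iter_add, code_letter.
  rewrite (iter_kap eps l (Nat.iter i (T3 eps l) x0) k) by (auto; apply iter_range; auto).
  reflexivity.
Qed.

Lemma M_ge1 eps M : 0 < eps < 1 -> irrational eps -> (forall n, (cf_digit eps n <= M)%Z) -> 1 <= IZR M.
Proof.
  intros He Hi Hb. assert (Hd := Hb 1%nat). assert (Ha := ad_ge1 eps He Hi 0).
  unfold ad, tt in Ha; simpl in Ha, Hd. apply IZR_le. lia.
Qed.

Lemma dirB eps l x0 M : 0 < eps < 1 -> irrational eps -> eps < l -> 1 - eps < l -> l < 1 -> 0 <= x0 < l ->
  (forall n, (cf_digit eps n <= M)%Z) ->
  forall w v, factor (iet3_word eps l x0) v -> is_power v w ->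
  INR (length v) <= (1 + 6 * (IZR M + 1) * (IZR M + 1) * (IZR M + 2)) * INR (length w).
Proof.
  intros He Hi H1 H2 H3 Hx Hb w v [i Hv] [Hw [Hpn Hpow]].
  set (p := length w) in *. set (N := length v) in *.
  assert (Hp1 : (1 <= p)%nat) by (unfold p; destruct w; [congruence|simpl; lia]).
  assert (HM := M_ge1 eps M He Hi Hb).
  assert (Hpr : 1 <= INR p) by (apply (le_INR 1); auto).
  destruct (Nat.eq_dec N p) as [HNp|HNp].
  { rewrite HNp. assert (0 <= 6 * (IZR M + 1) * (IZR M + 1) * (IZR M + 2)).
    { repeat apply Rmult_le_pos; lra. }
    nra. }
  set (N' := (N - p)%nat).
  assert (HN'1 : (1 <= N')%nat) by (unfold N'; lia).
  set (y := Nat.iter i (T3 eps l) x0).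
  assert (Hy : 0 <= y < l) by (apply iter_range; auto).
  set (z := Nat.iter (p + i) (T3 eps l) x0).
  assert (Hzy : z = Nat.iter p (T3 eps l) y) by (unfold z; rewrite Nat.iter_add; reflexivity).
  assert (Hz : 0 <= z < l) by (apply iter_range; auto).
  assert (Hrep : forall k, (k < N')%nat -> iet3_word eps l x0 (i + k) = iet3_word eps l x0 ((p + i) + k)).
  { intros k Hk. rewrite <- (Hv k) by (unfold N' in Hk; lia).
    replace (p + i + k)%nat with (i + (k + p))%nat by lia.
    rewrite <- (Hv (k + p)%nat) by (unfold N' in Hk; lia).
    rewrite !Hpow by (unfold N' in Hk; lia).
    f_equal. replace (k + p)%nat with (k + 1 * p)%nat by lia. rewrite Nat.Div0.mod_add. reflexivity. }
  assert (Hag0 : forall j, (j < N')%nat ->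
     code4 eps l (Rk eps (kap eps l y j) y) = code4 eps l (Rk eps (kap eps l z j) z)).
  { intros j Hj. assert (E := Hrep j Hj).
    rewrite !u_shift in E by auto. fold y z in E.
    apply letter_of_inj in E; auto.
    - apply code4_le2. rewrite <- iter_kap by auto. apply iter_range; auto.
    - apply code4_le2. rewrite <- iter_kap by auto. apply iter_range; auto. }
  destruct (lock_ii eps l y z He H1 H3 N' Hag0) as [_ Hag].
  set (K' := kap eps l y N') in *.
  assert (HK' : (N' <= K')%nat) by apply kap_bounds.
  set (kp := kap eps l y p).
  assert (Hkp : (p <= kp <= 2 * p)%nat) by apply kap_bounds.
  assert (Hzk : z = Rk eps kp y) by (rewrite Hzy; apply iter_kap; auto).
  assert (HL := lowb eps M He Hi Hb kp (- Int_part (y - INR kp * eps))%Z ltac:(lia)).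
  assert (Hdiff : Rabs (INR kp * eps - IZR (- Int_part (y - INR kp * eps))) = Rabs (z - y)).
  { rewrite Hzk. unfold Rk, frac_part. rewrite opp_IZR.
    rewrite <- Rabs_Ropp. f_equal. ring. }
  rewrite Hdiff in HL.
  assert (HG : Rabs (z - y) * INR K' < 3 * (IZR M + 1)).
  { destruct (Rlt_le_dec y z) as [Hyz|Hyz].
    - rewrite Rabs_right by lra.
      apply (gapb eps M He Hi Hb K' y z ltac:(lia) Hyz).
      apply (no_point eps l y z K' He H3 Hyz ltac:(lra) ltac:(lra) Hag).
    - destruct (Req_dec y z) as [Heq|Hne].
      { rewrite Heq, Rminus_diag, Rabs_R0 in HL. lra. }
      rewrite Rabs_left by lra. replace (- (z - y)) with (y - z) by ring.
      apply (gapb eps M He Hi Hb K' z y ltac:(lia) ltac:(lra)).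
      apply (no_point eps l z y K' He H3 ltac:(lra) ltac:(lra) ltac:(lra)).
      intros k Hk. symmetry. apply Hag; auto. }
  set (X := Rabs (z - y)) in *.
  assert (HX : 0 <= X) by apply Rabs_pos.
  assert (HkpR : INR kp <= 2 * INR p).
  { replace 2 with (INR 2) by reflexivity. rewrite <- mult_INR. apply le_INR. lia. }
  assert (HNR : INR N' <= INR K') by (apply le_INR; auto).
  assert (HNN : INR N = INR N' + INR p) by (rewrite <- plus_INR; f_equal; unfold N'; lia).
  rewrite HNN.
  set (A := (IZR M + 1) * (IZR M + 2)) in *.
  assert (HA : 2 <= A) by (unfold A; nra).
  assert (H1' : 1 < X * A * (2 * INR p)).
  { assert (X * (A * INR kp) <= X * (A * (2 * INR p))) by (apply Rmult_le_compat_l; auto; nra). nra. }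
  assert (H2' : X * INR N' < 3 * (IZR M + 1)) by nra.
  assert (H3' : INR N' < 3 * (IZR M + 1) * (A * 2 * INR p)).
  { assert (0 <= INR N') by apply pos_INR. nra. }
  unfold A in H3'. nra.
Qed.

Lemma pigeon : forall n2 n1 (Rel : nat -> nat -> Prop),
  (forall i, (i < n1)%nat -> exists j, (j < n2)%nat /\ Rel i j) ->
  (forall i i' j, (i < n1)%nat -> (i' < n1)%nat -> Rel i j -> Rel i' j -> i = i') -> (n1 <= n2)%nat.
Proof.
  induction n2 as [|n2 IH]; intros n1 Rel Hex Hinj.
  - destruct n1 as [|n1]; [lia|]. destruct (Hex 0%nat ltac:(lia)) as [j [Hj _]]. lia.
  - destruct (classic (exists i0, (i0 < n1)%nat /\ Rel i0 n2)) as [[i0 [Hi0 Hr0]]|Hno].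
    + set (sh := fun i => if Nat.ltb i i0 then i else S i).
      assert (Hsh : forall i, (i < n1 - 1)%nat -> (sh i < n1)%nat /\ sh i <> i0).
      { intros i Hi. unfold sh. destruct (Nat.ltb_spec i i0); lia. }
      assert (Hshi : forall i i', sh i = sh i' -> i = i').
      { intros i i'. unfold sh. destruct (Nat.ltb_spec i i0); destruct (Nat.ltb_spec i' i0); lia. }
      assert (H := IH (n1 - 1)%nat (fun i j => Rel (sh i) j)).
      assert ((n1 - 1 <= n2)%nat); [|lia].
      apply H.
      * intros i Hi. destruct (Hsh i Hi) as [Hs1 Hs2].
        destruct (Hex (sh i) Hs1) as [j [Hj Hr]].
        exists j. split; auto.
        destruct (Nat.eq_dec j n2) as [->|]; [|lia].
        exfalso. apply Hs2. apply (Hinj _ _ n2); auto.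
      * intros i i' j Hi Hi' Hr Hr'. apply Hshi.
        apply (Hinj _ _ j); auto; apply Hsh; auto.
    + assert ((n1 <= n2)%nat); [|lia].
      apply (IH n1 Rel); auto.
      intros i Hi. destruct (Hex i Hi) as [j [Hj Hr]]. exists j. split; auto.
      destruct (Nat.eq_dec j n2) as [->|]; [|lia].
      exfalso. apply Hno. exists i. auto.
Qed.

Lemma dens eps l x0 : 0 < eps < 1 -> irrational eps -> eps < l -> 1 - eps < l -> l < 1 -> 0 <= x0 < l ->
  forall b h, 0 <= b -> b + h <= l -> 0 < h -> exists i, b <= Nat.iter i (T3 eps l) x0 < b + h.
Proof.
  intros He Hi H1 H2 H3 Hx b h Hb Hbh Hh.
  destruct (archimed (3 / h)) as [Ha1 Ha2].
  assert (H3h : 0 < 3 / h) by (apply Rdiv_lt_0_compat; lra).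
  set (n' := Z.to_nat (up (3 / h))).
  assert (Hup : (0 < up (3 / h))%Z) by (apply lt_IZR; apply (Rlt_trans _ (3 / h)); [exact H3h | exact Ha1]).
  destruct (QQ_facts eps He Hi n') as (_ & _ & Hq & _).
  assert (Hq' : 3 / h < IZR (QQ eps (S n'))).
  { apply Rlt_le_trans with (IZR (up (3 / h))); auto. apply IZR_le. unfold n' in Hq. rewrite Z2Nat.id in Hq by lia. exact Hq. }
  destruct (grid eps He Hi n' (x0 - b - h / 2)) as (j & Hj1 & Hj2 & m & Hjm).
  assert (Hqh : 3 < h * IZR (QQ eps (S n'))).
  { apply (Rmult_lt_compat_l h) in Hq'; auto. replace (h * (3 / h)) with 3 in Hq' by (field; lra). lra. }
  assert (Hsm : Rabs (INR j * eps - IZR m - (x0 - b - h / 2)) < h / 2).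
  { assert (HQp : 0 < IZR (QQ eps (S n'))) by nra.
    apply (Rmult_lt_reg_r (IZR (QQ eps (S n')))); auto. nra. }
  apply Rabs_def2 in Hsm.
  set (t := x0 - INR j * eps + IZR m).
  assert (Ht : Rk eps j x0 = t).
  { unfold Rk. apply frac_unique with (m := (- m)%Z). unfold t; rewrite opp_IZR; ring. unfold t; lra. }
  destruct (hit eps l x0 He H1 H2 H3 Hx j ltac:(rewrite Ht; unfold t; lra)) as [i Hi'].
  exists i. rewrite iter_kap by auto. rewrite Hi', Ht. unfold t. lra.
Qed.

Lemma nth_map_seq0 (f : nat -> letter) n k : (k < n)%nat -> nth k (map f (seq 0 n)) LA = f k.
Proof.
  intros H. rewrite (nth_indep (map f (seq 0 n)) LA (f 0%nat)) by (rewrite length_map, length_seq; auto).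
  rewrite map_nth, seq_nth by auto. reflexivity.
Qed.

Lemma words_exist (u : nat -> letter) i0 pp L (c : nat -> letter) : (1 <= pp)%nat ->
  (forall m j, (m <= L)%nat -> (j < pp)%nat -> u (i0 + (m * pp + j))%nat = c j) ->
  exists w v, w <> nil /\ factor u w /\ factor u v /\ is_power v w /\
    INR (length v) / INR (length w) = INR (S L).
Proof.
  intros Hpp Hu.
  set (f := fun k => u (i0 + k)%nat).
  exists (map f (seq 0 pp)), (map f (seq 0 (S L * pp))).
  assert (Hlw : length (map f (seq 0 pp)) = pp) by (rewrite length_map, length_seq; auto).
  assert (Hlv : length (map f (seq 0 (S L * pp))) = (S L * pp)%nat) by (rewrite length_map, length_seq; auto).
  split; [|split; [|split; [|split]]].
  - destruct pp; [lia|]. simpl. discriminate.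
  - exists i0. intros k Hk. rewrite Hlw in Hk. rewrite nth_map_seq0 by auto. reflexivity.
  - exists i0. intros k Hk. rewrite Hlv in Hk. rewrite nth_map_seq0 by auto. reflexivity.
  - split; [destruct pp; [lia|]; simpl; discriminate|]. split; [rewrite Hlw, Hlv; nia|].
    intros k Hk. rewrite Hlv in Hk. rewrite Hlw.
    assert (Hm := Nat.mod_upper_bound k pp ltac:(lia)).
    rewrite !nth_map_seq0 by (auto; nia).
    unfold f.
    assert (Hd := Nat.div_mod_eq k pp).
    assert (Hq : (k / pp <= L)%nat) by nia.
    rewrite Hd at 1.
    replace (pp * (k / pp) + k mod pp)%nat with (k / pp * pp + k mod pp)%nat by ring.
    rewrite Hu by auto.
    replace (k mod pp) with (0 * pp + k mod pp)%nat at 2 by lia.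
    rewrite Hu by (auto; lia). reflexivity.
  - rewrite Hlv, Hlw, mult_INR. field. apply not_0_INR. lia.
Qed.

Lemma code4_stable eps l x s g : 0 <= s < g ->
  ~ (l - 1 + eps - g < x < l - 1 + eps) -> ~ (eps - g < x < eps) -> ~ (l - g < x < l) ->
  code4 eps l (x + s) = code4 eps l x.
Proof.
  intros Hs Ha Hb Hc. unfold code4.
  destruct (Rlt_dec (x + s) (l - 1 + eps)); destruct (Rlt_dec x (l - 1 + eps)); try (exfalso; lra);
  destruct (Rlt_dec (x + s) eps); destruct (Rlt_dec x eps); try (exfalso; lra); try reflexivity;
  destruct (Rlt_dec (x + s) l); destruct (Rlt_dec x l); try (exfalso; lra); reflexivity.
Qed.

Definition cv (eps l : R) (c : nat) : R :=
  match c with O => l - 1 + eps | S O => eps | S (S O) => l | _ => 1 end.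

Lemma dirA eps l x0 : 0 < eps < 1 -> irrational eps -> eps < l -> 1 - eps < l -> l < 1 -> 0 <= x0 < l ->
  forall (L n : nat), (64 * (Z.of_nat L + 1) <= ad eps n)%Z ->
  exists w v, w <> nil /\ factor (iet3_word eps l x0) w /\ factor (iet3_word eps l x0) v /\
    is_power v w /\ INR (length v) / INR (length w) = INR (S L).
Proof.
  intros He Hi H1 H2 H3 Hx L n Had.
  set (q := QQ eps (S n)).
  destruct (QQ_facts eps He Hi n) as ((Hq0 & Hqq) & Hq1 & _).
  fold q in Hq1, Hqq.
  set (qn := Z.to_nat q).
  assert (HqR : INR qn = IZR q) by (unfold qn; rewrite INR_IZR_INZ, Z2Nat.id by lia; reflexivity).
  assert (Hqn1 : (1 <= qn)%nat) by (unfold qn; lia).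
  assert (HqR1 : 1 <= IZR q) by (apply IZR_le; lia).
  set (e := ee eps n).
  destruct (ee_bounds eps He Hi n) as (He0 & He1 & _). fold e in He0, He1.
  assert (HQ2 : (64 * (Z.of_nat L + 1) * q <= QQ eps (S (S n)))%Z).
  { rewrite QQ_SS. fold q. nia. }
  assert (HQ2r : 64 * (INR L + 1) * IZR q <= IZR (QQ eps (S (S n)))).
  { rewrite INR_IZR_INZ. replace 64 with (IZR 64) by reflexivity. replace 1 with (IZR 1) by reflexivity.
    rewrite <- plus_IZR, <- !mult_IZR. apply IZR_le. exact HQ2. }
  assert (HeL : Rabs e * (64 * (INR L + 1) * IZR q) < 1).
  { assert (Rabs e * (64 * (INR L + 1) * IZR q) <= Rabs e * IZR (QQ eps (S (S n)))).
    { apply Rmult_le_compat_l; [apply Rabs_pos|]. exact HQ2r. }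
    lra. }
  set (g := / (32 * IZR q)).
  assert (Hg : g * (32 * IZR q) = 1) by (unfold g; field; lra).
  assert (Hg0 : 0 < g) by (unfold g; apply Rinv_0_lt_compat; lra).
  assert (Hg32 : g <= 1/32) by nra.
  assert (HL0 : 0 <= INR L) by apply pos_INR.
  assert (HeLg : Rabs e * (INR L + 1) < g / 2) by nra.
  assert (Heg : Rabs e < g / 2) by nra.
  assert (Hlh : 1/2 < l) by lra.
  set (cand := fun i : nat => 2 * g * (INR i + 1)).
  set (Rel := fun i j => exists k c, (k < qn)%nat /\ (c < 4)%nat /\ j = (4 * k + c)%nat /\
                cv eps l c - g < Rk eps k (cand i) < cv eps l c).
  assert (Hgood : exists i, (i < 4 * qn + 1)%nat /\ forall k c, (k < qn)%nat -> (c < 4)%nat ->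
            ~ (cv eps l c - g < Rk eps k (cand i) < cv eps l c)).
  { apply NNPP. intros Hno.
    assert (Hle : (4 * qn + 1 <= 4 * qn)%nat); [|lia].
    apply (pigeon (4 * qn) (4 * qn + 1) Rel).
    - intros i Hi0. apply NNPP. intros Hnj. apply Hno. exists i. split; auto.
      intros k c Hk Hc Hr. apply Hnj. exists (4 * k + c)%nat. split; [lia|]. exists k, c. auto.
    - intros i i' j Hi0 Hi1 [k [c [Hk [Hc [Hj Hr]]]]] [k' [c' [Hk' [Hc' [Hj' Hr']]]]].
      assert (k' = k) by lia. assert (c' = c) by lia. subst k' c'.
      destruct (Nat.eq_dec i i') as [|Hne]; auto. exfalso.
      set (mz := (Int_part (cand i' - INR k * eps) - Int_part (cand i - INR k * eps))%Z).
      assert (Hdf : Rk eps k (cand i) - Rk eps k (cand i') = (cand i - cand i') + IZR mz).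
      { unfold Rk, frac_part, mz. rewrite minus_IZR. ring. }
      assert (Hab : Rabs (Rk eps k (cand i) - Rk eps k (cand i')) < g) by (apply Rabs_def1; lra).
      rewrite Hdf in Hab.
      assert (Hii : 1 <= Rabs (INR i - INR i') <= 4 * INR qn).
      { destruct (Nat.lt_total i i') as [Hlt|[Heq|Hgt]]; [ | exfalso; lia | ].
        - rewrite Rabs_left by (apply Rlt_minus, lt_INR; auto).
          assert (INR i + 1 <= INR i') by (rewrite <- S_INR; apply le_INR; lia).
          assert (INR i' <= 4 * INR qn) by (replace 4 with (INR 4) by (simpl; lra); rewrite <- mult_INR; apply le_INR; lia).
          assert (0 <= INR i) by apply pos_INR. lra.
        - rewrite Rabs_right by (apply Rle_ge, Rlt_le, Rgt_minus, lt_INR; auto).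
          assert (INR i' + 1 <= INR i) by (rewrite <- S_INR; apply le_INR; lia).
          assert (INR i <= 4 * INR qn) by (replace 4 with (INR 4) by (simpl; lra); rewrite <- mult_INR; apply le_INR; lia).
          assert (0 <= INR i') by apply pos_INR. lra. }
      assert (Hcd : cand i - cand i' = 2 * g * (INR i - INR i')) by (unfold cand; ring).
      assert (Hcd1 : 2 * g <= Rabs (cand i - cand i') <= 1/4).
      { rewrite Hcd, Rabs_mult, (Rabs_right (2 * g)) by lra. rewrite HqR in Hii. nra. }
      destruct (Z.eq_dec mz 0) as [Hz|Hz].
      + rewrite Hz, Rplus_0_r in Hab. lra.
      + assert (Hmz : 1 <= Rabs (IZR mz)).
        { destruct (Z_lt_le_dec mz 0).
          - rewrite Rabs_left by (apply IZR_lt; auto). rewrite <- opp_IZR. apply IZR_le. lia.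
          - rewrite Rabs_right by (apply Rle_ge, IZR_le; auto). apply IZR_le. lia. }
        assert (Ht := Rabs_triang_inv (IZR mz) (- (cand i - cand i'))).
        rewrite Rabs_Ropp in Ht.
        replace (IZR mz - - (cand i - cand i')) with (cand i - cand i' + IZR mz) in Ht by ring.
        lra. }
  destruct Hgood as [i [Hi0 Hgd]].
  set (a := cand i).
  assert (Hi0R : INR i <= 4 * INR qn).
  { replace 4 with (INR 4) by (simpl; lra). rewrite <- mult_INR. apply le_INR. lia. }
  assert (Ha1 : 2 * g <= a) by (unfold a, cand; assert (0 <= INR i) by apply pos_INR; nra).
  assert (Ha2 : a + g <= 11/32).
  { unfold a, cand. rewrite HqR in Hi0R. nra. }
  assert (HG2 : forall z k, a <= z < a + g -> (k < qn)%nat ->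
     Rk eps k z = Rk eps k a + (z - a) /\ code4 eps l (Rk eps k z) = code4 eps l (Rk eps k a)).
  { intros z k Hz Hk.
    assert (Hr := Rk_range eps k a).
    assert (H4 := Hgd k 3%nat Hk ltac:(lia)). change (cv eps l 3) with 1 in H4. fold a in Hgd.
    assert (Hle : Rk eps k a <= 1 - g) by (destruct (Rle_lt_dec (Rk eps k a) (1 - g)); auto; exfalso; apply H4; fold a; lra).
    assert (E : Rk eps k z = Rk eps k a + (z - a)).
    { unfold Rk at 1. apply frac_unique with (m := Int_part (a - INR k * eps)).
      - unfold Rk, frac_part. ring.
      - lra. }
    split; auto. rewrite E. apply code4_stable with (g := g); [lra| | | ].
    - apply (Hgd k 0%nat Hk ltac:(lia)).
    - apply (Hgd k 1%nat Hk ltac:(lia)).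
    - apply (Hgd k 2%nat Hk ltac:(lia)). }
  assert (HG3 : forall z, a <= z < a + g -> Rk eps qn z = z - e).
  { intros z Hz. unfold Rk. apply frac_unique with (m := (- PP eps (S n))%Z).
    - rewrite opp_IZR, HqR. unfold e, ee. fold q. ring.
    - apply Rabs_def2 in Heg. lra. }
  assert (HaL : 0 <= a < l) by lra.
  destruct (hit eps l a He H1 H2 H3 HaL qn ltac:(rewrite HG3 by lra; apply Rabs_def2 in Heg; lra))
    as [pp Hpp].
  assert (Hpp1 : (1 <= pp)%nat) by (destruct pp; [simpl in Hpp; lia | lia]).
  assert (Hlock : forall z j, a <= z < a + g -> (j <= pp)%nat -> kap eps l z j = kap eps l a j).
  { intros z j Hz Hj. apply (lock_i eps l a z qn).
    - intros k Hk. symmetry. apply (HG2 z k Hz Hk).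
    - destruct (Nat.eq_dec j pp) as [->|]; [lia|]. assert (H := kap_mono eps l a j pp ltac:(lia)). lia. }
  assert (HT : forall z, a <= z < a + g -> Nat.iter pp (T3 eps l) z = z - e).
  { intros z Hz. rewrite iter_kap by (auto; lra). rewrite Hlock, Hpp by (auto; lia). apply HG3; auto. }
  assert (Hcode : forall z j, a <= z < a + g -> (j < pp)%nat ->
     code eps l (Nat.iter j (T3 eps l) z) = code eps l (Nat.iter j (T3 eps l) a)).
  { intros z j Hz Hj. rewrite !iter_kap by (auto; lra). rewrite !code_letter.
    rewrite Hlock by (auto; lia).
    assert (Hk := kap_mono eps l a j pp Hj). rewrite Hpp in Hk.
    f_equal. apply (HG2 z _ Hz Hk). }
  set (b := if Rlt_dec e 0 then a else a + g / 2).
  destruct (dens eps l x0 He Hi H1 H2 H3 Hx b (g / 2)) as [i0 Hi0b];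
    [unfold b; destruct (Rlt_dec e 0); lra | unfold b; destruct (Rlt_dec e 0); lra | lra |].
  set (y := Nat.iter i0 (T3 eps l) x0) in *.
  assert (Hin : forall m, (m <= L)%nat -> a <= y - INR m * e < a + g).
  { intros m Hm. assert (HmL : INR m <= INR L) by (apply le_INR; auto).
    assert (Hm0 : 0 <= INR m) by apply pos_INR.
    assert (HmE : INR m * Rabs e < g / 2).
    { assert (INR m * Rabs e <= INR L * Rabs e) by (apply Rmult_le_compat_r; [apply Rabs_pos|auto]). nra. }
    unfold b in Hi0b. destruct (Rlt_dec e 0) as [Hneg|Hpos].
    - rewrite Rabs_left in HmE by auto. nra.
    - rewrite Rabs_right in HmE by lra. nra. }
  assert (Hper : forall m, (m <= L)%nat -> Nat.iter (m * pp) (T3 eps l) y = y - INR m * e).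
  { induction m as [|m IH]; intros Hm.
    - simpl. ring.
    - replace (S m * pp)%nat with (pp + m * pp)%nat by lia.
      rewrite Nat.iter_add, IH by lia. rewrite HT by (apply Hin; lia). rewrite S_INR. ring. }
  apply (words_exist _ i0 pp L (fun j => code eps l (Nat.iter j (T3 eps l) a))); auto.
  intros m j Hm Hj. unfold iet3_word.
  replace (i0 + (m * pp + j))%nat with ((j + m * pp) + i0)%nat by lia.
  rewrite !Nat.iter_add. fold y. rewrite Hper by auto.
  apply Hcode; auto.
Qed.

Theorem theorem4 (eps l x0 : R) :
  0 < eps < 1 -> irrational eps ->
  Rmax eps (1 - eps) < l -> l < 1 ->
  0 <= x0 < l ->
  (Rbar_lt (ind_word (iet3_word eps l x0)) p_infty <->
   exists M : Z, forall n : nat, (cf_digit eps n <= M)%Z).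
Proof.
  intros He Hi Hmax Hl Hx.
  assert (H1 : eps < l) by (apply Rle_lt_trans with (Rmax eps (1 - eps)); auto; apply Rmax_l).
  assert (H2 : 1 - eps < l) by (apply Rle_lt_trans with (Rmax eps (1 - eps)); auto; apply Rmax_r).
  destruct (Lub_Rbar_correct (fun r => exists w v, w <> nil /\ factor (iet3_word eps l x0) w /\
      factor (iet3_word eps l x0) v /\ is_power v w /\ r = INR (length v) / INR (length w))) as [Hub Hlub].
  unfold ind_word. split.
  - intros Hlt. apply NNPP. intros Hno.
    assert (Hun : forall L : nat, exists n, (64 * (Z.of_nat L + 1) <= ad eps n)%Z).
    { intros L. apply NNPP. intros HnL. apply Hno. exists (64 * (Z.of_nat L + 1))%Z.
      intros [|n].
      - change (cf_digit eps 0) with 0%Z. lia.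
      - destruct (Z_le_gt_dec (cf_digit eps (S n)) (64 * (Z.of_nat L + 1))) as [H|H]; auto.
        exfalso; apply HnL. exists n. change (ad eps n) with (cf_digit eps (S n)). lia. }
    assert (Hin : forall L : nat, Rbar_le (INR (S L)) (Lub_Rbar (fun r => exists w v, w <> nil /\
       factor (iet3_word eps l x0) w /\ factor (iet3_word eps l x0) v /\ is_power v w /\
       r = INR (length v) / INR (length w)))).
    { intros L. apply Hub. destruct (Hun L) as [n Hn].
      destruct (dirA eps l x0 He Hi H1 H2 Hl Hx L n Hn) as (w & v & Hw & Hfw & Hfv & Hp & Hr).
      exists w, v. split; [auto|split;[auto|split;[auto|split;[auto|symmetry; auto]]]]. }
    destruct (Lub_Rbar _) as [r| |] eqn:EL; simpl in Hlt; try contradiction; try rewrite EL in Hin.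
    + destruct (archimed r) as [Ha _].
      set (L := Z.to_nat (up r)).
      assert (Hle : INR (S L) <= r) by exact (Hin L).
      assert (HL : IZR (up r) <= INR (S L)).
      { rewrite S_INR. unfold L. destruct (Z_lt_le_dec (up r) 0) as [Hn|Hp].
        - assert (0 <= INR (Z.to_nat (up r))) by apply pos_INR. apply IZR_lt in Hn. lra.
        - rewrite INR_IZR_INZ, Z2Nat.id by auto. lra. }
      lra.
    + assert (Hle := Hin 0%nat). simpl in Hle. exact Hle.
  - intros [M Hb].
    assert (Hle : Rbar_le (Lub_Rbar (fun r => exists w v, w <> nil /\ factor (iet3_word eps l x0) w /\
      factor (iet3_word eps l x0) v /\ is_power v w /\ r = INR (length v) / INR (length w)))
      (Finite (1 + 6 * (IZR M + 1) * (IZR M + 1) * (IZR M + 2)))).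
    { apply Hlub. intros r (w & v & Hw & Hfw & Hfv & Hp & Hr). simpl. subst r.
      assert (HB := dirB eps l x0 M He Hi H1 H2 Hl Hx Hb w v Hfv Hp).
      assert (Hpos : 0 < INR (length w)).
      { destruct w; [congruence|]. simpl length. rewrite S_INR. assert (0 <= INR (length w)) by apply pos_INR. lra. }
      apply (Rmult_le_reg_r (INR (length w))); auto.
      unfold Rdiv. rewrite Rmult_assoc, Rinv_l by lra. lra. }
    destruct (Lub_Rbar _); simpl in *; auto.
Qed.
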